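(* Let $Q=A_2\otimes E_8$ and $R=\sqrt3E_8$. There exist isometric embeddings of $Q\perp R$ into $E_8^3=E_8\perp E_8\perp E_8$; in fact there are at least two kinds: (i) embeddings such that the image of $R$ is the fixed-point sublattice of an automorphism of order $3$ of $E_8^3$ which permutes the three direct summands cyclically; and (ii) embeddings such that $(\mathbb Q R)\cap E_8^3$ (the intersection of $E_8^3$ with the rational span of the image of $R$) is an orthogonal direct summand of $E_8^3$.
   Context: $A_2\otimes E_8$ is the tensor product of root lattices with product form; $\sqrt3E_8$ is the $E_8$ lattice with form scaled by 3. *)

(* Defs.v *)
(* Lattices are modelled concretely as Z^n (row vectors
   'rV[int]_n) equipped with an integral Gram matrix. *)
From HB Require Import structures.
From mathcomp Require Import all_boot all_order all_algebra all_fingroup.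
Set Implicit Arguments. Unset Strict Implicit. Unset Printing Implicit Defensive.
Import Order.TTheory GRing.Theory Num.Theory.
Local Open Scope ring_scope.

Definition e8_adj (i j : nat) : bool :=
  [|| (i == 0) && (j == 2), (i == 2) && (j == 0),
      (i == 1) && (j == 3), (i == 3) && (j == 1),
      (i == 2) && (j == 3), (i == 3) && (j == 2),
      (i == 3) && (j == 4), (i == 4) && (j == 3),
      (i == 4) && (j == 5), (i == 5) && (j == 4),
      (i == 5) && (j == 6), (i == 6) && (j == 5),
      (i == 6) && (j == 7) | (i == 7) && (j == 6)].

Definition e8 (i j : nat) : int :=
  if i == j then 2 else if e8_adj i j then -1 else 0.

Definition a2 (i j : nat) : int := if i == j then 2 else -1.

Definition E8gram : 'M[int]_8 := \matrix_(i, j) e8 i j.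

(* Gram matrix of E8^3 = E8 _|_ E8 _|_ E8 on Z^24 (coordinate k lies in summand k %/ 8) *)
Definition E83gram : 'M[int]_24 :=
  \matrix_(i, j) (if (i %/ 8 == j %/ 8)%N then e8 (i %% 8) (j %% 8) else 0).

(* Gram matrix of Q _|_ R on Z^24: coordinates 0..15 span Q = A2 (x) E8
   (basis e_a (x) f_i, index 8a+i, Gram = a2 a b * e8 i j), coordinates
   16..23 span R = sqrt3 E8 (Gram = 3 * e8). *)
Definition QRgram : 'M[int]_24 :=
  \matrix_(i, j)
    (if ((i < 16) && (j < 16))%N then a2 (i %/ 8) (j %/ 8) * e8 (i %% 8) (j %% 8)
     else if ((16 <= i) && (16 <= j))%N then 3 * e8 (i - 16) (j - 16)
     else 0).

Definition bE83 (x y : 'rV[int]_24) : int := (x *m E83gram *m y^T) 0 0.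

(* An isometric embedding of Q _|_ R into E8^3: the i-th row of M is the
   image of the i-th basis vector of Q _|_ R (x |-> x *m M). *)
Definition isom_embedding (M : 'M[int]_24) : Prop :=
  M *m E83gram *m M^T = QRgram /\ (forall c : 'rV[int]_24, c *m M = 0 -> c = 0).

Definition R_coords {T : nmodType} (c : 'rV[T]_24) : Prop :=
  forall k : 'I_24, (k < 16)%N -> c 0 k = 0.

Definition imR (M : 'M[int]_24) (x : 'rV[int]_24) : Prop :=
  exists c : 'rV[int]_24, R_coords c /\ x = c *m M.

Definition satR (M : 'M[int]_24) (x : 'rV[int]_24) : Prop :=
  exists c : 'rV[rat]_24, R_coords c /\
    map_mx (fun z : int => z%:~R : rat) x = c *m map_mx (fun z : int => z%:~R : rat) M.

Definition aut_E83 (g : 'M[int]_24) : Prop :=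
  g \in unitmx /\ g *m E83gram *m g^T = E83gram.

Definition in_summand (i : 'I_3) (x : 'rV[int]_24) : Prop :=
  forall k : 'I_24, (k %/ 8 != i)%N -> x 0 k = 0.

Definition permutes_summands_cyclically (g : 'M[int]_24) : Prop :=
  exists s : 'S_3, s != 1%g /\ (s ^+ 3)%g = 1%g /\
    forall (i : 'I_3) (x : 'rV[int]_24), in_summand i x <-> in_summand (s i) (x *m g).

Definition orth_direct_summand (S : 'rV[int]_24 -> Prop) : Prop :=
  forall x : 'rV[int]_24, exists s t, S s /\ x = s + t /\ (forall y, S y -> bE83 t y = 0).

(* Main.v *)
Require Import Defs.
From mathcomp Require Import all_boot all_order all_algebra all_fingroup.
Set Implicit Arguments. Unset Strict Implicit. Unset Printing Implicit Defensive.
Import Order.TTheory GRing.Theory Num.Theory.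
Local Open Scope ring_scope.

Section Frame.
Variable T : pzRingType.
Definition mxf m n (f : nat -> nat -> T) : 'M[T]_(m,n) := \matrix_(i,j) f i j.
Definition sumf n (F : nat -> T) := foldr (fun k acc => F k + acc) 0 (iota 0 n).
Lemma sum_ordf n (F : nat -> T) : \sum_(k < n) F (k:nat) = sumf n F.
Proof.
rewrite -(big_mkord xpredT F) /index_iota subn0 /sumf.
elim: (iota 0 n) => [|a l IH]; first by rewrite big_nil.
by rewrite big_cons IH.
Qed.
Lemma mulmx_mxf m n p (f g : nat -> nat -> T) :
  mxf m n f *m mxf n p g = mxf m p (fun i j => sumf n (fun k => f i k * g k j)).
Proof.
apply/matrixP => i j; rewrite !mxE -sum_ordf; apply: eq_bigr => k _; by rewrite !mxE.
Qed.
Lemma trmx_mxf m n (f : nat -> nat -> T) : (mxf m n f)^T = mxf n m (fun i j => f j i).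
Proof. by apply/matrixP => i j; rewrite !mxE. Qed.
Lemma mxf_eqb m n (f g : nat -> nat -> T) :
  all (fun i => all (fun j => f i j == g i j) (iota 0 n)) (iota 0 m) ->
  mxf m n f = mxf m n g.
Proof.
move=> /allP H; apply/matrixP => i j; rewrite !mxE.
have Hi : (i:nat) \in iota 0 m by rewrite mem_iota /=.
have /allP H2 := H i Hi.
by apply/eqP; apply: H2; rewrite mem_iota /=.
Qed.
End Frame.

Definition lf (L : seq (seq int)) (i j : nat) : int := nth 0 (nth [::] L i) j.
Definition e83f (i j : nat) : int := if (i %/ 8 == j %/ 8)%N then e8 (i %% 8) (j %% 8) else 0.
Definition qrf (i j : nat) : int :=
    (if ((i < 16) && (j < 16))%N then a2 (i %/ 8) (j %/ 8) * e8 (i %% 8) (j %% 8)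
     else if ((16 <= i) && (16 <= j))%N then 3 * e8 (i - 16) (j - 16)
     else 0).
Lemma E83gramE : E83gram = mxf 24 24 e83f.
Proof. by apply/matrixP => i j; rewrite !mxE. Qed.
Lemma QRgramE : QRgram = mxf 24 24 qrf.
Proof. by apply/matrixP => i j; rewrite !mxE. Qed.
Definition dl {T : pzRingType} (h : nat -> nat) (a : nat -> T) : nat -> nat -> T :=
  fun l k => if (l == h k)%N then a k else 0.

Lemma mul_dl (T : pzRingType) n (x : 'rV[T]_n.+1) (h : nat -> nat) (a : nat -> T) (k : 'I_n.+1) :
  (h k < n.+1)%N -> (x *m mxf n.+1 n.+1 (dl h a)) 0 k = x 0 (inord (h k)) * a k.
Proof.
move=> hk; rewrite mxE (bigD1 (inord (h k))) //= mxE /dl inordK // eqxx.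
rewrite big1 ?addr0 // => l Hl; rewrite mxE /dl.
have -> : ((l : nat) == h k) = false.
  by apply/negbTE; apply: contra Hl => /eqP <-; rewrite inord_val.
by rewrite mulr0.
Qed.

Lemma one_mxf (T : pzRingType) n : (1%:M : 'M[T]_n.+1) = mxf n.+1 n.+1 (dl id (fun _ => 1)).
Proof.
apply/matrixP => i j; rewrite /mxf !mxE /dl /=.
have -> : (i == j) = ((i:nat) == j) by []. by case: (_ == _).
Qed.

Lemma inj_of_N (M N : 'M[int]_24) :
  M *m N = mxf 24 24 (dl id (fun _ => 3)) -> forall c : 'rV[int]_24, c *m M = 0 -> c = 0.
Proof.
move=> HMN c Hc; have : c *m M *m N = 0 by rewrite Hc mul0mx.
rewrite -mulmxA HMN => H; apply/matrixP => i k; rewrite ord1.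
have := congr1 (fun A : 'rV[int]_24 => A 0 k) H; rewrite mul_dl //= inord_val !mxE => /eqP; by rewrite mulf_eq0 orbF => /eqP.
Qed.
Definition M1L : seq (seq int) :=
[:: [:: Posz 1; Posz 0; Posz 0; Posz 0; Posz 0; Posz 0; Posz 0; Posz 0; Negz 0; Posz 0; Posz 0; Posz 0; Posz 0; Posz 0; Posz 0; Posz 0; Posz 0; Posz 0; Posz 0; Posz 0; Posz 0; Posz 0; Posz 0; Posz 0];
 [:: Posz 0; Posz 1; Posz 0; Posz 0; Posz 0; Posz 0; Posz 0; Posz 0; Posz 0; Negz 0; Posz 0; Posz 0; Posz 0; Posz 0; Posz 0; Posz 0; Posz 0; Posz 0; Posz 0; Posz 0; Posz 0; Posz 0; Posz 0; Posz 0];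
 [:: Posz 0; Posz 0; Posz 1; Posz 0; Posz 0; Posz 0; Posz 0; Posz 0; Posz 0; Posz 0; Negz 0; Posz 0; Posz 0; Posz 0; Posz 0; Posz 0; Posz 0; Posz 0; Posz 0; Posz 0; Posz 0; Posz 0; Posz 0; Posz 0];
 [:: Posz 0; Posz 0; Posz 0; Posz 1; Posz 0; Posz 0; Posz 0; Posz 0; Posz 0; Posz 0; Posz 0; Negz 0; Posz 0; Posz 0; Posz 0; Posz 0; Posz 0; Posz 0; Posz 0; Posz 0; Posz 0; Posz 0; Posz 0; Posz 0];
 [:: Posz 0; Posz 0; Posz 0; Posz 0; Posz 1; Posz 0; Posz 0; Posz 0; Posz 0; Posz 0; Posz 0; Posz 0; Negz 0; Posz 0; Posz 0; Posz 0; Posz 0; Posz 0; Posz 0; Posz 0; Posz 0; Posz 0; Posz 0; Posz 0];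
 [:: Posz 0; Posz 0; Posz 0; Posz 0; Posz 0; Posz 1; Posz 0; Posz 0; Posz 0; Posz 0; Posz 0; Posz 0; Posz 0; Negz 0; Posz 0; Posz 0; Posz 0; Posz 0; Posz 0; Posz 0; Posz 0; Posz 0; Posz 0; Posz 0];
 [:: Posz 0; Posz 0; Posz 0; Posz 0; Posz 0; Posz 0; Posz 1; Posz 0; Posz 0; Posz 0; Posz 0; Posz 0; Posz 0; Posz 0; Negz 0; Posz 0; Posz 0; Posz 0; Posz 0; Posz 0; Posz 0; Posz 0; Posz 0; Posz 0];
 [:: Posz 0; Posz 0; Posz 0; Posz 0; Posz 0; Posz 0; Posz 0; Posz 1; Posz 0; Posz 0; Posz 0; Posz 0; Posz 0; Posz 0; Posz 0; Negz 0; Posz 0; Posz 0; Posz 0; Posz 0; Posz 0; Posz 0; Posz 0; Posz 0];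
 [:: Posz 0; Posz 0; Posz 0; Posz 0; Posz 0; Posz 0; Posz 0; Posz 0; Posz 1; Posz 0; Posz 0; Posz 0; Posz 0; Posz 0; Posz 0; Posz 0; Negz 0; Posz 0; Posz 0; Posz 0; Posz 0; Posz 0; Posz 0; Posz 0];
 [:: Posz 0; Posz 0; Posz 0; Posz 0; Posz 0; Posz 0; Posz 0; Posz 0; Posz 0; Posz 1; Posz 0; Posz 0; Posz 0; Posz 0; Posz 0; Posz 0; Posz 0; Negz 0; Posz 0; Posz 0; Posz 0; Posz 0; Posz 0; Posz 0];
 [:: Posz 0; Posz 0; Posz 0; Posz 0; Posz 0; Posz 0; Posz 0; Posz 0; Posz 0; Posz 0; Posz 1; Posz 0; Posz 0; Posz 0; Posz 0; Posz 0; Posz 0; Posz 0; Negz 0; Posz 0; Posz 0; Posz 0; Posz 0; Posz 0];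
 [:: Posz 0; Posz 0; Posz 0; Posz 0; Posz 0; Posz 0; Posz 0; Posz 0; Posz 0; Posz 0; Posz 0; Posz 1; Posz 0; Posz 0; Posz 0; Posz 0; Posz 0; Posz 0; Posz 0; Negz 0; Posz 0; Posz 0; Posz 0; Posz 0];
 [:: Posz 0; Posz 0; Posz 0; Posz 0; Posz 0; Posz 0; Posz 0; Posz 0; Posz 0; Posz 0; Posz 0; Posz 0; Posz 1; Posz 0; Posz 0; Posz 0; Posz 0; Posz 0; Posz 0; Posz 0; Negz 0; Posz 0; Posz 0; Posz 0];
 [:: Posz 0; Posz 0; Posz 0; Posz 0; Posz 0; Posz 0; Posz 0; Posz 0; Posz 0; Posz 0; Posz 0; Posz 0; Posz 0; Posz 1; Posz 0; Posz 0; Posz 0; Posz 0; Posz 0; Posz 0; Posz 0; Negz 0; Posz 0; Posz 0];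
 [:: Posz 0; Posz 0; Posz 0; Posz 0; Posz 0; Posz 0; Posz 0; Posz 0; Posz 0; Posz 0; Posz 0; Posz 0; Posz 0; Posz 0; Posz 1; Posz 0; Posz 0; Posz 0; Posz 0; Posz 0; Posz 0; Posz 0; Negz 0; Posz 0];
 [:: Posz 0; Posz 0; Posz 0; Posz 0; Posz 0; Posz 0; Posz 0; Posz 0; Posz 0; Posz 0; Posz 0; Posz 0; Posz 0; Posz 0; Posz 0; Posz 1; Posz 0; Posz 0; Posz 0; Posz 0; Posz 0; Posz 0; Posz 0; Negz 0];
 [:: Posz 1; Posz 0; Posz 0; Posz 0; Posz 0; Posz 0; Posz 0; Posz 0; Posz 1; Posz 0; Posz 0; Posz 0; Posz 0; Posz 0; Posz 0; Posz 0; Posz 1; Posz 0; Posz 0; Posz 0; Posz 0; Posz 0; Posz 0; Posz 0];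
 [:: Posz 0; Posz 1; Posz 0; Posz 0; Posz 0; Posz 0; Posz 0; Posz 0; Posz 0; Posz 1; Posz 0; Posz 0; Posz 0; Posz 0; Posz 0; Posz 0; Posz 0; Posz 1; Posz 0; Posz 0; Posz 0; Posz 0; Posz 0; Posz 0];
 [:: Posz 0; Posz 0; Posz 1; Posz 0; Posz 0; Posz 0; Posz 0; Posz 0; Posz 0; Posz 0; Posz 1; Posz 0; Posz 0; Posz 0; Posz 0; Posz 0; Posz 0; Posz 0; Posz 1; Posz 0; Posz 0; Posz 0; Posz 0; Posz 0];
 [:: Posz 0; Posz 0; Posz 0; Posz 1; Posz 0; Posz 0; Posz 0; Posz 0; Posz 0; Posz 0; Posz 0; Posz 1; Posz 0; Posz 0; Posz 0; Posz 0; Posz 0; Posz 0; Posz 0; Posz 1; Posz 0; Posz 0; Posz 0; Posz 0];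
 [:: Posz 0; Posz 0; Posz 0; Posz 0; Posz 1; Posz 0; Posz 0; Posz 0; Posz 0; Posz 0; Posz 0; Posz 0; Posz 1; Posz 0; Posz 0; Posz 0; Posz 0; Posz 0; Posz 0; Posz 0; Posz 1; Posz 0; Posz 0; Posz 0];
 [:: Posz 0; Posz 0; Posz 0; Posz 0; Posz 0; Posz 1; Posz 0; Posz 0; Posz 0; Posz 0; Posz 0; Posz 0; Posz 0; Posz 1; Posz 0; Posz 0; Posz 0; Posz 0; Posz 0; Posz 0; Posz 0; Posz 1; Posz 0; Posz 0];
 [:: Posz 0; Posz 0; Posz 0; Posz 0; Posz 0; Posz 0; Posz 1; Posz 0; Posz 0; Posz 0; Posz 0; Posz 0; Posz 0; Posz 0; Posz 1; Posz 0; Posz 0; Posz 0; Posz 0; Posz 0; Posz 0; Posz 0; Posz 1; Posz 0];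
 [:: Posz 0; Posz 0; Posz 0; Posz 0; Posz 0; Posz 0; Posz 0; Posz 1; Posz 0; Posz 0; Posz 0; Posz 0; Posz 0; Posz 0; Posz 0; Posz 1; Posz 0; Posz 0; Posz 0; Posz 0; Posz 0; Posz 0; Posz 0; Posz 1]].

Definition N1L : seq (seq int) :=
[:: [:: Posz 2; Posz 0; Posz 0; Posz 0; Posz 0; Posz 0; Posz 0; Posz 0; Posz 1; Posz 0; Posz 0; Posz 0; Posz 0; Posz 0; Posz 0; Posz 0; Posz 1; Posz 0; Posz 0; Posz 0; Posz 0; Posz 0; Posz 0; Posz 0];
 [:: Posz 0; Posz 2; Posz 0; Posz 0; Posz 0; Posz 0; Posz 0; Posz 0; Posz 0; Posz 1; Posz 0; Posz 0; Posz 0; Posz 0; Posz 0; Posz 0; Posz 0; Posz 1; Posz 0; Posz 0; Posz 0; Posz 0; Posz 0; Posz 0];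
 [:: Posz 0; Posz 0; Posz 2; Posz 0; Posz 0; Posz 0; Posz 0; Posz 0; Posz 0; Posz 0; Posz 1; Posz 0; Posz 0; Posz 0; Posz 0; Posz 0; Posz 0; Posz 0; Posz 1; Posz 0; Posz 0; Posz 0; Posz 0; Posz 0];
 [:: Posz 0; Posz 0; Posz 0; Posz 2; Posz 0; Posz 0; Posz 0; Posz 0; Posz 0; Posz 0; Posz 0; Posz 1; Posz 0; Posz 0; Posz 0; Posz 0; Posz 0; Posz 0; Posz 0; Posz 1; Posz 0; Posz 0; Posz 0; Posz 0];
 [:: Posz 0; Posz 0; Posz 0; Posz 0; Posz 2; Posz 0; Posz 0; Posz 0; Posz 0; Posz 0; Posz 0; Posz 0; Posz 1; Posz 0; Posz 0; Posz 0; Posz 0; Posz 0; Posz 0; Posz 0; Posz 1; Posz 0; Posz 0; Posz 0];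
 [:: Posz 0; Posz 0; Posz 0; Posz 0; Posz 0; Posz 2; Posz 0; Posz 0; Posz 0; Posz 0; Posz 0; Posz 0; Posz 0; Posz 1; Posz 0; Posz 0; Posz 0; Posz 0; Posz 0; Posz 0; Posz 0; Posz 1; Posz 0; Posz 0];
 [:: Posz 0; Posz 0; Posz 0; Posz 0; Posz 0; Posz 0; Posz 2; Posz 0; Posz 0; Posz 0; Posz 0; Posz 0; Posz 0; Posz 0; Posz 1; Posz 0; Posz 0; Posz 0; Posz 0; Posz 0; Posz 0; Posz 0; Posz 1; Posz 0];
 [:: Posz 0; Posz 0; Posz 0; Posz 0; Posz 0; Posz 0; Posz 0; Posz 2; Posz 0; Posz 0; Posz 0; Posz 0; Posz 0; Posz 0; Posz 0; Posz 1; Posz 0; Posz 0; Posz 0; Posz 0; Posz 0; Posz 0; Posz 0; Posz 1];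
 [:: Negz 0; Posz 0; Posz 0; Posz 0; Posz 0; Posz 0; Posz 0; Posz 0; Posz 1; Posz 0; Posz 0; Posz 0; Posz 0; Posz 0; Posz 0; Posz 0; Posz 1; Posz 0; Posz 0; Posz 0; Posz 0; Posz 0; Posz 0; Posz 0];
 [:: Posz 0; Negz 0; Posz 0; Posz 0; Posz 0; Posz 0; Posz 0; Posz 0; Posz 0; Posz 1; Posz 0; Posz 0; Posz 0; Posz 0; Posz 0; Posz 0; Posz 0; Posz 1; Posz 0; Posz 0; Posz 0; Posz 0; Posz 0; Posz 0];
 [:: Posz 0; Posz 0; Negz 0; Posz 0; Posz 0; Posz 0; Posz 0; Posz 0; Posz 0; Posz 0; Posz 1; Posz 0; Posz 0; Posz 0; Posz 0; Posz 0; Posz 0; Posz 0; Posz 1; Posz 0; Posz 0; Posz 0; Posz 0; Posz 0];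
 [:: Posz 0; Posz 0; Posz 0; Negz 0; Posz 0; Posz 0; Posz 0; Posz 0; Posz 0; Posz 0; Posz 0; Posz 1; Posz 0; Posz 0; Posz 0; Posz 0; Posz 0; Posz 0; Posz 0; Posz 1; Posz 0; Posz 0; Posz 0; Posz 0];
 [:: Posz 0; Posz 0; Posz 0; Posz 0; Negz 0; Posz 0; Posz 0; Posz 0; Posz 0; Posz 0; Posz 0; Posz 0; Posz 1; Posz 0; Posz 0; Posz 0; Posz 0; Posz 0; Posz 0; Posz 0; Posz 1; Posz 0; Posz 0; Posz 0];
 [:: Posz 0; Posz 0; Posz 0; Posz 0; Posz 0; Negz 0; Posz 0; Posz 0; Posz 0; Posz 0; Posz 0; Posz 0; Posz 0; Posz 1; Posz 0; Posz 0; Posz 0; Posz 0; Posz 0; Posz 0; Posz 0; Posz 1; Posz 0; Posz 0];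
 [:: Posz 0; Posz 0; Posz 0; Posz 0; Posz 0; Posz 0; Negz 0; Posz 0; Posz 0; Posz 0; Posz 0; Posz 0; Posz 0; Posz 0; Posz 1; Posz 0; Posz 0; Posz 0; Posz 0; Posz 0; Posz 0; Posz 0; Posz 1; Posz 0];
 [:: Posz 0; Posz 0; Posz 0; Posz 0; Posz 0; Posz 0; Posz 0; Negz 0; Posz 0; Posz 0; Posz 0; Posz 0; Posz 0; Posz 0; Posz 0; Posz 1; Posz 0; Posz 0; Posz 0; Posz 0; Posz 0; Posz 0; Posz 0; Posz 1];
 [:: Negz 0; Posz 0; Posz 0; Posz 0; Posz 0; Posz 0; Posz 0; Posz 0; Negz 1; Posz 0; Posz 0; Posz 0; Posz 0; Posz 0; Posz 0; Posz 0; Posz 1; Posz 0; Posz 0; Posz 0; Posz 0; Posz 0; Posz 0; Posz 0];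
 [:: Posz 0; Negz 0; Posz 0; Posz 0; Posz 0; Posz 0; Posz 0; Posz 0; Posz 0; Negz 1; Posz 0; Posz 0; Posz 0; Posz 0; Posz 0; Posz 0; Posz 0; Posz 1; Posz 0; Posz 0; Posz 0; Posz 0; Posz 0; Posz 0];
 [:: Posz 0; Posz 0; Negz 0; Posz 0; Posz 0; Posz 0; Posz 0; Posz 0; Posz 0; Posz 0; Negz 1; Posz 0; Posz 0; Posz 0; Posz 0; Posz 0; Posz 0; Posz 0; Posz 1; Posz 0; Posz 0; Posz 0; Posz 0; Posz 0];
 [:: Posz 0; Posz 0; Posz 0; Negz 0; Posz 0; Posz 0; Posz 0; Posz 0; Posz 0; Posz 0; Posz 0; Negz 1; Posz 0; Posz 0; Posz 0; Posz 0; Posz 0; Posz 0; Posz 0; Posz 1; Posz 0; Posz 0; Posz 0; Posz 0];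
 [:: Posz 0; Posz 0; Posz 0; Posz 0; Negz 0; Posz 0; Posz 0; Posz 0; Posz 0; Posz 0; Posz 0; Posz 0; Negz 1; Posz 0; Posz 0; Posz 0; Posz 0; Posz 0; Posz 0; Posz 0; Posz 1; Posz 0; Posz 0; Posz 0];
 [:: Posz 0; Posz 0; Posz 0; Posz 0; Posz 0; Negz 0; Posz 0; Posz 0; Posz 0; Posz 0; Posz 0; Posz 0; Posz 0; Negz 1; Posz 0; Posz 0; Posz 0; Posz 0; Posz 0; Posz 0; Posz 0; Posz 1; Posz 0; Posz 0];
 [:: Posz 0; Posz 0; Posz 0; Posz 0; Posz 0; Posz 0; Negz 0; Posz 0; Posz 0; Posz 0; Posz 0; Posz 0; Posz 0; Posz 0; Negz 1; Posz 0; Posz 0; Posz 0; Posz 0; Posz 0; Posz 0; Posz 0; Posz 1; Posz 0];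
 [:: Posz 0; Posz 0; Posz 0; Posz 0; Posz 0; Posz 0; Posz 0; Negz 0; Posz 0; Posz 0; Posz 0; Posz 0; Posz 0; Posz 0; Posz 0; Negz 1; Posz 0; Posz 0; Posz 0; Posz 0; Posz 0; Posz 0; Posz 0; Posz 1]].

Definition M2L : seq (seq int) :=
[:: [:: Posz 0; Posz 0; Posz 0; Posz 0; Posz 0; Posz 0; Posz 0; Posz 0; Posz 1; Posz 0; Posz 0; Posz 0; Posz 0; Posz 0; Posz 0; Posz 0; Posz 1; Posz 0; Posz 0; Posz 0; Posz 0; Posz 0; Posz 0; Posz 0];
 [:: Posz 0; Posz 0; Posz 0; Posz 0; Posz 0; Posz 0; Posz 0; Posz 0; Posz 0; Posz 1; Posz 0; Posz 0; Posz 0; Posz 0; Posz 0; Posz 0; Posz 0; Posz 1; Posz 0; Posz 0; Posz 0; Posz 0; Posz 0; Posz 0];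
 [:: Posz 0; Posz 0; Posz 0; Posz 0; Posz 0; Posz 0; Posz 0; Posz 0; Posz 0; Posz 0; Posz 1; Posz 0; Posz 0; Posz 0; Posz 0; Posz 0; Posz 0; Posz 0; Posz 1; Posz 0; Posz 0; Posz 0; Posz 0; Posz 0];
 [:: Posz 0; Posz 0; Posz 0; Posz 0; Posz 0; Posz 0; Posz 0; Posz 0; Posz 0; Posz 0; Posz 0; Posz 1; Posz 0; Posz 0; Posz 0; Posz 0; Posz 0; Posz 0; Posz 0; Posz 1; Posz 0; Posz 0; Posz 0; Posz 0];
 [:: Posz 0; Posz 0; Posz 0; Posz 0; Posz 0; Posz 0; Posz 0; Posz 0; Posz 0; Posz 0; Posz 0; Posz 0; Posz 1; Posz 0; Posz 0; Posz 0; Posz 0; Posz 0; Posz 0; Posz 0; Posz 1; Posz 0; Posz 0; Posz 0];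
 [:: Posz 0; Posz 0; Posz 0; Posz 0; Posz 0; Posz 0; Posz 0; Posz 0; Posz 0; Posz 0; Posz 0; Posz 0; Posz 0; Posz 1; Posz 0; Posz 0; Posz 0; Posz 0; Posz 0; Posz 0; Posz 0; Posz 1; Posz 0; Posz 0];
 [:: Posz 0; Posz 0; Posz 0; Posz 0; Posz 0; Posz 0; Posz 0; Posz 0; Posz 0; Posz 0; Posz 0; Posz 0; Posz 0; Posz 0; Posz 1; Posz 0; Posz 0; Posz 0; Posz 0; Posz 0; Posz 0; Posz 0; Posz 1; Posz 0];
 [:: Posz 0; Posz 0; Posz 0; Posz 0; Posz 0; Posz 0; Posz 0; Posz 0; Posz 0; Posz 0; Posz 0; Posz 0; Posz 0; Posz 0; Posz 0; Posz 1; Posz 0; Posz 0; Posz 0; Posz 0; Posz 0; Posz 0; Posz 0; Posz 1];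
 [:: Posz 0; Posz 0; Posz 0; Posz 0; Posz 0; Posz 0; Posz 0; Posz 0; Negz 0; Negz 0; Negz 0; Negz 1; Negz 0; Negz 0; Negz 0; Posz 0; Posz 0; Posz 1; Posz 1; Posz 2; Posz 1; Posz 1; Posz 1; Posz 0];
 [:: Posz 0; Posz 0; Posz 0; Posz 0; Posz 0; Posz 0; Posz 0; Posz 0; Negz 0; Negz 1; Negz 1; Negz 2; Negz 1; Negz 1; Negz 0; Negz 0; Posz 1; Posz 1; Posz 2; Posz 3; Posz 2; Posz 2; Posz 1; Posz 1];
 [:: Posz 0; Posz 0; Posz 0; Posz 0; Posz 0; Posz 0; Posz 0; Posz 0; Negz 0; Negz 0; Negz 1; Negz 1; Negz 1; Negz 0; Negz 0; Negz 0; Posz 1; Posz 1; Posz 1; Posz 2; Posz 2; Posz 1; Posz 1; Posz 1];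
 [:: Posz 0; Posz 0; Posz 0; Posz 0; Posz 0; Posz 0; Posz 0; Posz 0; Posz 1; Posz 1; Posz 1; Posz 1; Posz 1; Posz 1; Posz 1; Posz 1; Negz 0; Negz 0; Negz 0; Negz 1; Negz 0; Negz 0; Negz 0; Negz 0];
 [:: Posz 0; Posz 0; Posz 0; Posz 0; Posz 0; Posz 0; Posz 0; Posz 0; Posz 0; Posz 0; Posz 1; Posz 1; Posz 0; Posz 0; Posz 0; Posz 0; Posz 0; Posz 0; Negz 0; Negz 0; Negz 0; Posz 0; Posz 0; Posz 0];
 [:: Posz 0; Posz 0; Posz 0; Posz 0; Posz 0; Posz 0; Posz 0; Posz 0; Posz 0; Posz 1; Posz 0; Posz 1; Posz 1; Posz 0; Posz 0; Posz 0; Posz 0; Negz 0; Posz 0; Negz 0; Negz 0; Negz 0; Posz 0; Posz 0];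
 [:: Posz 0; Posz 0; Posz 0; Posz 0; Posz 0; Posz 0; Posz 0; Posz 0; Posz 1; Posz 0; Posz 1; Posz 1; Posz 1; Posz 1; Posz 0; Posz 0; Negz 0; Posz 0; Negz 0; Negz 0; Negz 0; Negz 0; Negz 0; Posz 0];
 [:: Posz 0; Posz 0; Posz 0; Posz 0; Posz 0; Posz 0; Posz 0; Posz 0; Posz 0; Posz 1; Posz 1; Posz 1; Posz 1; Posz 1; Posz 1; Posz 0; Posz 0; Negz 0; Negz 0; Negz 0; Negz 0; Negz 0; Negz 0; Negz 0];
 [:: Negz 0; Negz 1; Negz 1; Negz 3; Negz 1; Negz 1; Negz 1; Posz 0; Posz 0; Posz 0; Posz 0; Posz 0; Posz 0; Posz 0; Posz 0; Posz 0; Posz 0; Posz 0; Posz 0; Posz 0; Posz 0; Posz 0; Posz 0; Posz 0];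
 [:: Negz 1; Negz 2; Negz 3; Negz 5; Negz 3; Negz 3; Negz 1; Negz 1; Posz 0; Posz 0; Posz 0; Posz 0; Posz 0; Posz 0; Posz 0; Posz 0; Posz 0; Posz 0; Posz 0; Posz 0; Posz 0; Posz 0; Posz 0; Posz 0];
 [:: Negz 1; Negz 1; Negz 2; Negz 3; Negz 3; Negz 1; Negz 1; Negz 1; Posz 0; Posz 0; Posz 0; Posz 0; Posz 0; Posz 0; Posz 0; Posz 0; Posz 0; Posz 0; Posz 0; Posz 0; Posz 0; Posz 0; Posz 0; Posz 0];
 [:: Posz 2; Posz 2; Posz 2; Posz 3; Posz 2; Posz 2; Posz 2; Posz 2; Posz 0; Posz 0; Posz 0; Posz 0; Posz 0; Posz 0; Posz 0; Posz 0; Posz 0; Posz 0; Posz 0; Posz 0; Posz 0; Posz 0; Posz 0; Posz 0];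
 [:: Posz 0; Posz 0; Posz 2; Posz 2; Posz 1; Posz 0; Posz 0; Posz 0; Posz 0; Posz 0; Posz 0; Posz 0; Posz 0; Posz 0; Posz 0; Posz 0; Posz 0; Posz 0; Posz 0; Posz 0; Posz 0; Posz 0; Posz 0; Posz 0];
 [:: Posz 0; Posz 2; Posz 0; Posz 2; Posz 2; Posz 1; Posz 0; Posz 0; Posz 0; Posz 0; Posz 0; Posz 0; Posz 0; Posz 0; Posz 0; Posz 0; Posz 0; Posz 0; Posz 0; Posz 0; Posz 0; Posz 0; Posz 0; Posz 0];
 [:: Posz 2; Posz 0; Posz 2; Posz 2; Posz 2; Posz 2; Posz 1; Posz 0; Posz 0; Posz 0; Posz 0; Posz 0; Posz 0; Posz 0; Posz 0; Posz 0; Posz 0; Posz 0; Posz 0; Posz 0; Posz 0; Posz 0; Posz 0; Posz 0];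
 [:: Posz 0; Posz 2; Posz 2; Posz 2; Posz 2; Posz 2; Posz 2; Posz 1; Posz 0; Posz 0; Posz 0; Posz 0; Posz 0; Posz 0; Posz 0; Posz 0; Posz 0; Posz 0; Posz 0; Posz 0; Posz 0; Posz 0; Posz 0; Posz 0]].

Definition N2L : seq (seq int) :=
[:: [:: Posz 0; Posz 0; Posz 0; Posz 0; Posz 0; Posz 0; Posz 0; Posz 0; Posz 0; Posz 0; Posz 0; Posz 0; Posz 0; Posz 0; Posz 0; Posz 0; Posz 1; Posz 2; Posz 2; Posz 4; Posz 2; Posz 2; Posz 2; Posz 0];
 [:: Posz 0; Posz 0; Posz 0; Posz 0; Posz 0; Posz 0; Posz 0; Posz 0; Posz 0; Posz 0; Posz 0; Posz 0; Posz 0; Posz 0; Posz 0; Posz 0; Posz 2; Posz 3; Posz 4; Posz 6; Posz 4; Posz 4; Posz 2; Posz 2];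
 [:: Posz 0; Posz 0; Posz 0; Posz 0; Posz 0; Posz 0; Posz 0; Posz 0; Posz 0; Posz 0; Posz 0; Posz 0; Posz 0; Posz 0; Posz 0; Posz 0; Posz 2; Posz 2; Posz 3; Posz 4; Posz 4; Posz 2; Posz 2; Posz 2];
 [:: Posz 0; Posz 0; Posz 0; Posz 0; Posz 0; Posz 0; Posz 0; Posz 0; Posz 0; Posz 0; Posz 0; Posz 0; Posz 0; Posz 0; Posz 0; Posz 0; Negz 1; Negz 1; Negz 1; Negz 2; Negz 1; Negz 1; Negz 1; Negz 1];
 [:: Posz 0; Posz 0; Posz 0; Posz 0; Posz 0; Posz 0; Posz 0; Posz 0; Posz 0; Posz 0; Posz 0; Posz 0; Posz 0; Posz 0; Posz 0; Posz 0; Posz 0; Posz 0; Negz 1; Negz 1; Negz 0; Posz 0; Posz 0; Posz 0];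
 [:: Posz 0; Posz 0; Posz 0; Posz 0; Posz 0; Posz 0; Posz 0; Posz 0; Posz 0; Posz 0; Posz 0; Posz 0; Posz 0; Posz 0; Posz 0; Posz 0; Posz 0; Negz 1; Posz 0; Negz 1; Negz 1; Negz 0; Posz 0; Posz 0];
 [:: Posz 0; Posz 0; Posz 0; Posz 0; Posz 0; Posz 0; Posz 0; Posz 0; Posz 0; Posz 0; Posz 0; Posz 0; Posz 0; Posz 0; Posz 0; Posz 0; Negz 1; Posz 0; Negz 1; Negz 1; Negz 1; Negz 1; Negz 0; Posz 0];
 [:: Posz 0; Posz 0; Posz 0; Posz 0; Posz 0; Posz 0; Posz 0; Posz 0; Posz 0; Posz 0; Posz 0; Posz 0; Posz 0; Posz 0; Posz 0; Posz 0; Posz 0; Negz 1; Negz 1; Negz 1; Negz 1; Negz 1; Negz 1; Negz 0];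
 [:: Posz 2; Posz 1; Posz 1; Posz 2; Posz 1; Posz 1; Posz 1; Posz 0; Posz 1; Posz 2; Posz 2; Posz 4; Posz 2; Posz 2; Posz 2; Posz 0; Posz 0; Posz 0; Posz 0; Posz 0; Posz 0; Posz 0; Posz 0; Posz 0];
 [:: Posz 1; Posz 3; Posz 2; Posz 3; Posz 2; Posz 2; Posz 1; Posz 1; Posz 2; Posz 3; Posz 4; Posz 6; Posz 4; Posz 4; Posz 2; Posz 2; Posz 0; Posz 0; Posz 0; Posz 0; Posz 0; Posz 0; Posz 0; Posz 0];
 [:: Posz 1; Posz 1; Posz 3; Posz 2; Posz 2; Posz 1; Posz 1; Posz 1; Posz 2; Posz 2; Posz 3; Posz 4; Posz 4; Posz 2; Posz 2; Posz 2; Posz 0; Posz 0; Posz 0; Posz 0; Posz 0; Posz 0; Posz 0; Posz 0];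
 [:: Negz 0; Negz 0; Negz 0; Posz 0; Negz 0; Negz 0; Negz 0; Negz 0; Negz 1; Negz 1; Negz 1; Negz 2; Negz 1; Negz 1; Negz 1; Negz 1; Posz 0; Posz 0; Posz 0; Posz 0; Posz 0; Posz 0; Posz 0; Posz 0];
 [:: Posz 0; Posz 0; Negz 0; Negz 0; Posz 1; Posz 0; Posz 0; Posz 0; Posz 0; Posz 0; Negz 1; Negz 1; Negz 0; Posz 0; Posz 0; Posz 0; Posz 0; Posz 0; Posz 0; Posz 0; Posz 0; Posz 0; Posz 0; Posz 0];
 [:: Posz 0; Negz 0; Posz 0; Negz 0; Negz 0; Posz 1; Posz 0; Posz 0; Posz 0; Negz 1; Posz 0; Negz 1; Negz 1; Negz 0; Posz 0; Posz 0; Posz 0; Posz 0; Posz 0; Posz 0; Posz 0; Posz 0; Posz 0; Posz 0];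
 [:: Negz 0; Posz 0; Negz 0; Negz 0; Negz 0; Negz 0; Posz 1; Posz 0; Negz 1; Posz 0; Negz 1; Negz 1; Negz 1; Negz 1; Negz 0; Posz 0; Posz 0; Posz 0; Posz 0; Posz 0; Posz 0; Posz 0; Posz 0; Posz 0];
 [:: Posz 0; Negz 0; Negz 0; Negz 0; Negz 0; Negz 0; Negz 0; Posz 1; Posz 0; Negz 1; Negz 1; Negz 1; Negz 1; Negz 1; Negz 1; Negz 0; Posz 0; Posz 0; Posz 0; Posz 0; Posz 0; Posz 0; Posz 0; Posz 0];
 [:: Posz 1; Negz 0; Negz 0; Negz 1; Negz 0; Negz 0; Negz 0; Posz 0; Negz 0; Negz 1; Negz 1; Negz 3; Negz 1; Negz 1; Negz 1; Posz 0; Posz 0; Posz 0; Posz 0; Posz 0; Posz 0; Posz 0; Posz 0; Posz 0];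
 [:: Negz 0; Posz 0; Negz 1; Negz 2; Negz 1; Negz 1; Negz 0; Negz 0; Negz 1; Negz 2; Negz 3; Negz 5; Negz 3; Negz 3; Negz 1; Negz 1; Posz 0; Posz 0; Posz 0; Posz 0; Posz 0; Posz 0; Posz 0; Posz 0];
 [:: Negz 0; Negz 0; Posz 0; Negz 1; Negz 1; Negz 0; Negz 0; Negz 0; Negz 1; Negz 1; Negz 2; Negz 3; Negz 3; Negz 1; Negz 1; Negz 1; Posz 0; Posz 0; Posz 0; Posz 0; Posz 0; Posz 0; Posz 0; Posz 0];
 [:: Posz 1; Posz 1; Posz 1; Posz 3; Posz 1; Posz 1; Posz 1; Posz 1; Posz 2; Posz 2; Posz 2; Posz 3; Posz 2; Posz 2; Posz 2; Posz 2; Posz 0; Posz 0; Posz 0; Posz 0; Posz 0; Posz 0; Posz 0; Posz 0];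
 [:: Posz 0; Posz 0; Posz 1; Posz 1; Posz 2; Posz 0; Posz 0; Posz 0; Posz 0; Posz 0; Posz 2; Posz 2; Posz 1; Posz 0; Posz 0; Posz 0; Posz 0; Posz 0; Posz 0; Posz 0; Posz 0; Posz 0; Posz 0; Posz 0];
 [:: Posz 0; Posz 1; Posz 0; Posz 1; Posz 1; Posz 2; Posz 0; Posz 0; Posz 0; Posz 2; Posz 0; Posz 2; Posz 2; Posz 1; Posz 0; Posz 0; Posz 0; Posz 0; Posz 0; Posz 0; Posz 0; Posz 0; Posz 0; Posz 0];
 [:: Posz 1; Posz 0; Posz 1; Posz 1; Posz 1; Posz 1; Posz 2; Posz 0; Posz 2; Posz 0; Posz 2; Posz 2; Posz 2; Posz 2; Posz 1; Posz 0; Posz 0; Posz 0; Posz 0; Posz 0; Posz 0; Posz 0; Posz 0; Posz 0];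
 [:: Posz 0; Posz 1; Posz 1; Posz 1; Posz 1; Posz 1; Posz 1; Posz 2; Posz 0; Posz 2; Posz 2; Posz 2; Posz 2; Posz 2; Posz 2; Posz 1; Posz 0; Posz 0; Posz 0; Posz 0; Posz 0; Posz 0; Posz 0; Posz 0]].

Definition thL : seq (seq int) :=
[:: [:: Negz 0; Negz 1; Negz 1; Negz 3; Negz 1; Negz 1; Negz 1; Posz 0];
 [:: Negz 1; Negz 2; Negz 3; Negz 5; Negz 3; Negz 3; Negz 1; Negz 1];
 [:: Negz 1; Negz 1; Negz 2; Negz 3; Negz 3; Negz 1; Negz 1; Negz 1];
 [:: Posz 2; Posz 2; Posz 2; Posz 3; Posz 2; Posz 2; Posz 2; Posz 2];
 [:: Posz 0; Posz 0; Posz 2; Posz 2; Posz 1; Posz 0; Posz 0; Posz 0];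
 [:: Posz 0; Posz 2; Posz 0; Posz 2; Posz 2; Posz 1; Posz 0; Posz 0];
 [:: Posz 2; Posz 0; Posz 2; Posz 2; Posz 2; Posz 2; Posz 1; Posz 0];
 [:: Posz 0; Posz 2; Posz 2; Posz 2; Posz 2; Posz 2; Posz 2; Posz 1]].

Definition KL : seq (seq int) :=
[:: [:: Posz 0; Posz 0; Posz 0; Posz 0; Posz 0; Posz 0; Posz 0; Posz 0; Posz 0; Posz 0; Posz 0; Posz 0; Posz 0; Posz 0; Posz 0; Posz 0; Negz 0; Negz 1; Negz 1; Negz 3; Negz 1; Negz 1; Negz 1; Posz 0];
 [:: Posz 0; Posz 0; Posz 0; Posz 0; Posz 0; Posz 0; Posz 0; Posz 0; Posz 0; Posz 0; Posz 0; Posz 0; Posz 0; Posz 0; Posz 0; Posz 0; Negz 1; Negz 2; Negz 3; Negz 5; Negz 3; Negz 3; Negz 1; Negz 1];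
 [:: Posz 0; Posz 0; Posz 0; Posz 0; Posz 0; Posz 0; Posz 0; Posz 0; Posz 0; Posz 0; Posz 0; Posz 0; Posz 0; Posz 0; Posz 0; Posz 0; Negz 1; Negz 1; Negz 2; Negz 3; Negz 3; Negz 1; Negz 1; Negz 1];
 [:: Posz 0; Posz 0; Posz 0; Posz 0; Posz 0; Posz 0; Posz 0; Posz 0; Posz 0; Posz 0; Posz 0; Posz 0; Posz 0; Posz 0; Posz 0; Posz 0; Posz 2; Posz 2; Posz 2; Posz 3; Posz 2; Posz 2; Posz 2; Posz 2];
 [:: Posz 0; Posz 0; Posz 0; Posz 0; Posz 0; Posz 0; Posz 0; Posz 0; Posz 0; Posz 0; Posz 0; Posz 0; Posz 0; Posz 0; Posz 0; Posz 0; Posz 0; Posz 0; Posz 2; Posz 2; Posz 1; Posz 0; Posz 0; Posz 0];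
 [:: Posz 0; Posz 0; Posz 0; Posz 0; Posz 0; Posz 0; Posz 0; Posz 0; Posz 0; Posz 0; Posz 0; Posz 0; Posz 0; Posz 0; Posz 0; Posz 0; Posz 0; Posz 2; Posz 0; Posz 2; Posz 2; Posz 1; Posz 0; Posz 0];
 [:: Posz 0; Posz 0; Posz 0; Posz 0; Posz 0; Posz 0; Posz 0; Posz 0; Posz 0; Posz 0; Posz 0; Posz 0; Posz 0; Posz 0; Posz 0; Posz 0; Posz 2; Posz 0; Posz 2; Posz 2; Posz 2; Posz 2; Posz 1; Posz 0];
 [:: Posz 0; Posz 0; Posz 0; Posz 0; Posz 0; Posz 0; Posz 0; Posz 0; Posz 0; Posz 0; Posz 0; Posz 0; Posz 0; Posz 0; Posz 0; Posz 0; Posz 0; Posz 2; Posz 2; Posz 2; Posz 2; Posz 2; Posz 2; Posz 1];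
 [:: Posz 0; Posz 0; Posz 0; Posz 0; Posz 0; Posz 0; Posz 0; Posz 0; Posz 0; Posz 0; Posz 0; Posz 0; Posz 0; Posz 0; Posz 0; Posz 0; Posz 0; Posz 0; Posz 0; Posz 0; Posz 0; Posz 0; Posz 0; Posz 0];
 [:: Posz 0; Posz 0; Posz 0; Posz 0; Posz 0; Posz 0; Posz 0; Posz 0; Posz 0; Posz 0; Posz 0; Posz 0; Posz 0; Posz 0; Posz 0; Posz 0; Posz 0; Posz 0; Posz 0; Posz 0; Posz 0; Posz 0; Posz 0; Posz 0];
 [:: Posz 0; Posz 0; Posz 0; Posz 0; Posz 0; Posz 0; Posz 0; Posz 0; Posz 0; Posz 0; Posz 0; Posz 0; Posz 0; Posz 0; Posz 0; Posz 0; Posz 0; Posz 0; Posz 0; Posz 0; Posz 0; Posz 0; Posz 0; Posz 0];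
 [:: Posz 0; Posz 0; Posz 0; Posz 0; Posz 0; Posz 0; Posz 0; Posz 0; Posz 0; Posz 0; Posz 0; Posz 0; Posz 0; Posz 0; Posz 0; Posz 0; Posz 0; Posz 0; Posz 0; Posz 0; Posz 0; Posz 0; Posz 0; Posz 0];
 [:: Posz 0; Posz 0; Posz 0; Posz 0; Posz 0; Posz 0; Posz 0; Posz 0; Posz 0; Posz 0; Posz 0; Posz 0; Posz 0; Posz 0; Posz 0; Posz 0; Posz 0; Posz 0; Posz 0; Posz 0; Posz 0; Posz 0; Posz 0; Posz 0];
 [:: Posz 0; Posz 0; Posz 0; Posz 0; Posz 0; Posz 0; Posz 0; Posz 0; Posz 0; Posz 0; Posz 0; Posz 0; Posz 0; Posz 0; Posz 0; Posz 0; Posz 0; Posz 0; Posz 0; Posz 0; Posz 0; Posz 0; Posz 0; Posz 0];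
 [:: Posz 0; Posz 0; Posz 0; Posz 0; Posz 0; Posz 0; Posz 0; Posz 0; Posz 0; Posz 0; Posz 0; Posz 0; Posz 0; Posz 0; Posz 0; Posz 0; Posz 0; Posz 0; Posz 0; Posz 0; Posz 0; Posz 0; Posz 0; Posz 0];
 [:: Posz 0; Posz 0; Posz 0; Posz 0; Posz 0; Posz 0; Posz 0; Posz 0; Posz 0; Posz 0; Posz 0; Posz 0; Posz 0; Posz 0; Posz 0; Posz 0; Posz 0; Posz 0; Posz 0; Posz 0; Posz 0; Posz 0; Posz 0; Posz 0];
 [:: Posz 0; Posz 0; Posz 0; Posz 0; Posz 0; Posz 0; Posz 0; Posz 0; Posz 0; Posz 0; Posz 0; Posz 0; Posz 0; Posz 0; Posz 0; Posz 0; Posz 0; Posz 0; Posz 0; Posz 0; Posz 0; Posz 0; Posz 0; Posz 0];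
 [:: Posz 0; Posz 0; Posz 0; Posz 0; Posz 0; Posz 0; Posz 0; Posz 0; Posz 0; Posz 0; Posz 0; Posz 0; Posz 0; Posz 0; Posz 0; Posz 0; Posz 0; Posz 0; Posz 0; Posz 0; Posz 0; Posz 0; Posz 0; Posz 0];
 [:: Posz 0; Posz 0; Posz 0; Posz 0; Posz 0; Posz 0; Posz 0; Posz 0; Posz 0; Posz 0; Posz 0; Posz 0; Posz 0; Posz 0; Posz 0; Posz 0; Posz 0; Posz 0; Posz 0; Posz 0; Posz 0; Posz 0; Posz 0; Posz 0];
 [:: Posz 0; Posz 0; Posz 0; Posz 0; Posz 0; Posz 0; Posz 0; Posz 0; Posz 0; Posz 0; Posz 0; Posz 0; Posz 0; Posz 0; Posz 0; Posz 0; Posz 0; Posz 0; Posz 0; Posz 0; Posz 0; Posz 0; Posz 0; Posz 0];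
 [:: Posz 0; Posz 0; Posz 0; Posz 0; Posz 0; Posz 0; Posz 0; Posz 0; Posz 0; Posz 0; Posz 0; Posz 0; Posz 0; Posz 0; Posz 0; Posz 0; Posz 0; Posz 0; Posz 0; Posz 0; Posz 0; Posz 0; Posz 0; Posz 0];
 [:: Posz 0; Posz 0; Posz 0; Posz 0; Posz 0; Posz 0; Posz 0; Posz 0; Posz 0; Posz 0; Posz 0; Posz 0; Posz 0; Posz 0; Posz 0; Posz 0; Posz 0; Posz 0; Posz 0; Posz 0; Posz 0; Posz 0; Posz 0; Posz 0];
 [:: Posz 0; Posz 0; Posz 0; Posz 0; Posz 0; Posz 0; Posz 0; Posz 0; Posz 0; Posz 0; Posz 0; Posz 0; Posz 0; Posz 0; Posz 0; Posz 0; Posz 0; Posz 0; Posz 0; Posz 0; Posz 0; Posz 0; Posz 0; Posz 0];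
 [:: Posz 0; Posz 0; Posz 0; Posz 0; Posz 0; Posz 0; Posz 0; Posz 0; Posz 0; Posz 0; Posz 0; Posz 0; Posz 0; Posz 0; Posz 0; Posz 0; Posz 0; Posz 0; Posz 0; Posz 0; Posz 0; Posz 0; Posz 0; Posz 0]].

Ltac refl_mx := apply: mxf_eqb; vm_compute; reflexivity.

Definition pre (k : nat) : nat := ((k + 16) %% 24)%N.
Definition G : 'M[int]_24 := mxf 24 24 (dl pre (fun _ => 1)).
Definition M1 : 'M[int]_24 := mxf 24 24 (lf M1L).
Definition N1 : 'M[int]_24 := mxf 24 24 (lf N1L).
Definition DR : 'M[int]_24 := mxf 24 24 (dl id (fun k => if (16 <= k)%N then 1 else 0)).
Definition PR : 'M[int]_24 := mxf 24 24 (dl (fun k => k - 16)%N (fun k => if (16 <= k)%N then 1 else 0)).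
Definition E1 : 'M[int]_24 := mxf 24 24 (dl (fun k => k %% 8)%N (fun _ => 1)).

Lemma M1iso : M1 *m E83gram *m M1^T = QRgram.
Proof. rewrite E83gramE QRgramE /M1 trmx_mxf !mulmx_mxf; refl_mx. Qed.
Lemma M1N1 : M1 *m N1 = mxf 24 24 (dl id (fun _ => 3)).
Proof. rewrite /M1 /N1 !mulmx_mxf; refl_mx. Qed.
Lemma Giso : G *m E83gram *m G^T = E83gram.
Proof. rewrite E83gramE /G trmx_mxf !mulmx_mxf; refl_mx. Qed.
Lemma G3 : G *m (G *m G) = 1%:M.
Proof. rewrite one_mxf /G !mulmx_mxf; refl_mx. Qed.
Lemma DRM1G : DR *m M1 *m G = DR *m M1.
Proof. rewrite /DR /M1 /G !mulmx_mxf; refl_mx. Qed.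
Lemma PRM1 : PR *m M1 = E1.
Proof. rewrite /PR /M1 /E1 !mulmx_mxf; refl_mx. Qed.
From mathcomp Require Import zify.

Lemma xG (x : 'rV[int]_24) (k : 'I_24) : (x *m G) 0 k = x 0 (inord (pre k)).
Proof. by rewrite /G mul_dl ?mulr1 // /pre ltn_mod. Qed.

Definition s3 : {perm 'I_3} := perm (@ordS_inj 3).

Lemma s3E i : s3 i = ordS i.
Proof. by rewrite /s3 permE. Qed.

Lemma part1_perm : permutes_summands_cyclically G.
Proof.
exists s3; split.
  apply/eqP => /permP/(_ ord0); rewrite s3E perm1 => /(congr1 val) //.
split.
  apply/permP => i; rewrite permX perm1 /= !s3E.
  apply/eqP; rewrite -val_eqE /=.
  by case: i => [[|[|[|i]]] Hi].
move=> i x; split.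
- move=> Hx k Hk; rewrite xG; apply: Hx.
  rewrite s3E /= in Hk; rewrite inordK; last by rewrite /pre ltn_mod.
  have := ltn_ord k; have := ltn_ord i; move: Hk; rewrite /pre; lia.
- move=> H k Hk.
  have Hk' : (((k + 8) %% 24) < 24)%N by rewrite ltn_mod.
  have := H (inord ((k + 8) %% 24)); rewrite xG.
  have -> : (inord (pre (inord ((k + 8) %% 24) : 'I_24)) : 'I_24) = k.
    apply/eqP; rewrite -val_eqE; apply/eqP; rewrite /pre /= !inordK ?ltn_mod //.
    have := ltn_ord k; lia.
  apply; rewrite s3E /= inordK //.
  have := ltn_ord k; have := ltn_ord i; move: Hk; lia.
Qed.

Lemma cDR (c : 'rV[int]_24) : R_coords c -> c *m DR = c.
Proof.
move=> Hc; apply/matrixP => i k; rewrite ord1 /DR mul_dl //= inord_val.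
case: ltnP => h; first by rewrite mulr1.
by rewrite mulr0 Hc.
Qed.

Lemma part1_imR x : imR M1 x <-> x *m G = x.
Proof.
split.
  move=> [c [Hc ->]].
  by have := congr1 (mulmx c) DRM1G; rewrite !mulmxA (cDR Hc).
move=> Hfix; exists (x *m PR); split.
  move=> k hk; rewrite /PR mul_dl; last by apply: leq_ltn_trans (leq_subr _ _) (ltn_ord k).
  by rewrite leqNgt hk /= mulr0.
rewrite -mulmxA PRM1; apply/matrixP => i k; rewrite ord1 /E1 mul_dl; last by lia.
rewrite mulr1.
have e1 : forall k : 'I_24, x 0 k = x 0 (inord (pre k)).
  by move=> k'; rewrite -{1}Hfix xG.
case: (ltnP k 8) => h1; first by rewrite modn_small // inord_val.
case: (ltnP k 16) => h2.
  rewrite (e1 k); congr (x 0 _); apply/eqP; rewrite -val_eqE; apply/eqP; rewrite /pre /= !inordK ?ltn_mod //.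
  - lia.
  - have := ltn_ord k; lia.
rewrite (e1 k) (e1 (inord (pre k))); congr (x 0 _); apply/eqP; rewrite -val_eqE; apply/eqP.
rewrite /pre /= !inordK ?ltn_mod //.
- have := ltn_ord k; lia.
- have := ltn_ord k; lia.
Qed.
Definition M2 : 'M[int]_24 := mxf 24 24 (lf M2L).
Definition N2 : 'M[int]_24 := mxf 24 24 (lf N2L).
Definition K2 : 'M[int]_24 := mxf 24 24 (lf KL).
Definition D0 : 'M[int]_24 := mxf 24 24 (dl id (fun k => if (k < 8)%N then 1 else 0)).

Lemma M2iso : M2 *m E83gram *m M2^T = QRgram.
Proof. rewrite E83gramE QRgramE /M2 trmx_mxf !mulmx_mxf; refl_mx. Qed.
Lemma M2N2 : M2 *m N2 = mxf 24 24 (dl id (fun _ => 3)).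
Proof. rewrite /M2 /N2 !mulmx_mxf; refl_mx. Qed.
Lemma K2M2 : K2 *m M2 = mxf 24 24 (dl id (fun k => if (k < 8)%N then -3 else 0)).
Proof. rewrite /M2 /K2 !mulmx_mxf; refl_mx. Qed.

Lemma M2zb : all (fun k => all (fun l => lf M2L k l == 0) (iota 8 16)) (iota 16 8).
Proof. vm_compute; reflexivity. Qed.
Lemma K2zb : all (fun l => all (fun k => lf KL l k == 0) (iota 0 16)) (iota 0 24).
Proof. vm_compute; reflexivity. Qed.

Lemma M2z (k l : 'I_24) : (16 <= k)%N -> (8 <= l)%N -> M2 k l = 0.
Proof.
move=> hk hl; rewrite /M2 /mxf mxE; apply/eqP.
have Hk : (k:nat) \in iota 16 8 by rewrite mem_iota hk /=; have := ltn_ord k; lia.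
have /allP H := M2zb; have /allP H2 := H k Hk.
by apply: H2; rewrite mem_iota hl /=; have := ltn_ord l; lia.
Qed.
Lemma K2z (l k : 'I_24) : (k < 16)%N -> K2 l k = 0.
Proof.
move=> hk; rewrite /K2 /mxf mxE; apply/eqP.
have Hl : (l:nat) \in iota 0 24 by rewrite mem_iota /= (ltn_ord l).
have /allP H := K2zb; have /allP H2 := H l Hl.
by apply: H2; rewrite mem_iota /= hk.
Qed.

Lemma sKM (x : 'rV[int]_24) :
  x *m D0 *m mxf 24 24 (dl id (fun k => if (k < 8)%N then -3 else 0)) = (-3) *: (x *m D0).
Proof.
apply/matrixP => i k; rewrite ord1 mul_dl //= inord_val [in RHS]mxE /D0 !mul_dl //= !inord_val.
by case: ltnP => _; rewrite ?mulr0 ?mulr1 // mulrC.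
Qed.

Lemma satR_s (x : 'rV[int]_24) : satR M2 (x *m D0).
Proof.
exists ((-3)^-1 *: map_mx (fun z : int => z%:~R : rat) (x *m D0 *m K2)); split.
  move=> k hk; rewrite mxE mxE mxE big1 ?mulr0 // => l _.
  by rewrite K2z // mulr0.
rewrite -scalemxAl -map_mxM -mulmxA K2M2 sKM map_mxZ scalerA.
by rewrite mulVf ?scale1r.
Qed.

Lemma satR_supp (y : 'rV[int]_24) : satR M2 y -> forall l : 'I_24, (8 <= l)%N -> y 0 l = 0.
Proof.
move=> [c [Hc Hy]] l hl; have := congr1 (fun A : 'rV[rat]_24 => A 0 l) Hy; rewrite /= !mxE big1.
  by move/eqP; rewrite intr_eq0 => /eqP.
move=> k _; case: (ltnP k 16) => hk; first by rewrite Hc // mul0r.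
by rewrite mxE M2z // mulr0.
Qed.

Lemma part2 : exists M : 'M[int]_24, isom_embedding M /\ orth_direct_summand (satR M).
Proof.
exists M2; split; first by split; [exact: M2iso | exact: inj_of_N M2N2].
move=> x; exists (x *m D0), (x - x *m D0); split; first exact: satR_s.
split; first by rewrite addrC subrK.
move=> y Hy; rewrite /bE83 mxE big1 // => a _; rewrite !mxE.
case: (ltnP a 8) => ha; last by rewrite (satR_supp Hy) // mulr0.
rewrite big1 ?mul0r // => b _; rewrite !mxE.
case: (ltnP b 8) => hb.
  have -> : \sum_j x 0 j * D0 j b = (x *m D0) 0 b by rewrite mxE.
  by rewrite /D0 mul_dl //= inord_val hb mulr1 subrr mul0r.
have -> : (b %/ 8 == a %/ 8)%N = false by apply/negbTE; have := ltn_ord b; lia.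
by rewrite mulr0.
Qed.

Theorem lemma6p1 :
  (exists M : 'M[int]_24, isom_embedding M /\
     exists g : 'M[int]_24, aut_E83 g /\ g ^+ 3 = 1 /\ g != 1 /\
       permutes_summands_cyclically g /\
       (forall x : 'rV[int]_24, imR M x <-> x *m g = x))
  /\
  (exists M : 'M[int]_24, isom_embedding M /\ orth_direct_summand (satR M)).
Proof.
split; last exact: part2.
exists M1; split; first by split; [exact: M1iso | exact: inj_of_N M1N1].
exists G; split.
  by split; [case: (mulmx1_unit G3) | exact: Giso].
split.
  by rewrite !exprS expr0 mulr1; exact: G3.
split.
  apply/eqP => H; have := congr1 (fun A : 'M[int]_24 => A 0 0) H.
  by rewrite /G /mxf !mxE.
by split; [exact: part1_perm | exact: part1_imR].
Qed.
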